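(* For every finite graph $\mathbb{G}$, the height 1 condition $\Sigma_{\mathbb{G}}$ is trivial if and only if $\mathbb{G}$ is 3-colorable (i.e., admits a homomorphism to $\mathbb{K}_3$).
   Context: A graph is a structure $(V,E)$ with a single symmetric binary relation $E$ (loops allowed); $\mathbb{K}_3$ is the complete loopless graph on three vertices. A clone on a set $A$ is a set of finitary operations on $A$ containing all projections and closed under composition; $\mathcal{P}$ is the clone of projections on $\{0,1\}$. A height 1 condition is a finite set of identities $f(x_{\pi(1)},\dots,x_{\pi(n)})\approx g(x_{\rho(1)},\dots,x_{\rho(m)})$ (function symbols $f,g$, arbitrary maps $\pi,\rho$, universally quantified); a clone satisfies it if its symbols can be assigned functions of the clone of the right arities making all identities true; the condition is trivial if it is satisfied in every clone (equivalently, in $\mathcal{P}$). For a finite graph $\mathbb{G}=(V,E)$, $\Sigma_{\mathbb{G}}$ is the height 1 condition with a ternary symbol $f_v$ for each $v\in V$, a $6$-ary symbol $g_{(u,v)}$ for each $(u,v)\in E$, and, for each $(u,v)\in E$, the identities $f_u(x,y,z)\approx g_{(u,v)}(x,y,x,z,y,z)$ and $f_v(x,y,z)\approx g_{(u,v)}(y,x,z,x,z,y)$. *)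

(* Defs.v *)
From mathcomp Require Import all_boot.
Set Implicit Arguments. Unset Strict Implicit. Unset Printing Implicit Defensive.

Definition op (A : Type) (n : nat) := ('I_n -> A) -> A.

Definition is_clone (A : Type) (C : forall n, op A n -> Prop) : Prop :=
  (forall n (i : 'I_n), C n (fun x => x i)) /\
  (forall n m (f : op A n) (gs : 'I_n -> op A m),
      C n f -> (forall i, C m (gs i)) ->
      C m (fun x => f (fun i => gs i x))).

(** An identity  f(x_{pi(1)},...,x_{pi(n)}) ~ g(x_{rho(1)},...,x_{rho(m)})
    over variables x_0, ..., x_{nv-1}. *)
Record h1id (S : Type) (ar : S -> nat) := H1Id {
  h1lhs : S; h1rhs : S; h1nv : nat;
  h1pi : 'I_(ar h1lhs) -> 'I_h1nv;
  h1rho : 'I_(ar h1rhs) -> 'I_h1nv }.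

Record h1cond := H1Cond {
  h1sym : Type;
  h1ar : h1sym -> nat;
  h1idx : finType;
  h1ids : h1idx -> h1id h1ar }.

Definition satisfies (A : Type) (C : forall n, op A n -> Prop) (S : h1cond) : Prop :=
  exists F : forall s : h1sym S, op A (h1ar s),
    (forall s, C (h1ar s) (F s)) /\
    (forall k : h1idx S, forall x : 'I_(h1nv (h1ids k)) -> A,
        F (h1lhs (h1ids k)) (fun i => x (h1pi i)) =
        F (h1rhs (h1ids k)) (fun j => x (h1rho j))).

Definition trivial_h1 (S : h1cond) : Prop :=
  forall (A : Type) (C : forall n, op A n -> Prop), is_clone C -> satisfies C S.

(** A finite graph is a finType V with a symmetric relation E (loops allowed). *)
Section SigmaG.
Variables (V : finType) (E : rel V).

Definition edge := {p : V * V | E p.1 p.2}.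

(** symbols: f_v (ternary) for v in V, g_(u,v) (6-ary) for (u,v) in E *)
Definition sigma_sym := (V + edge)%type.
Definition sigma_ar (s : sigma_sym) : nat :=
  match s with inl _ => 3 | inr _ => 6 end.

(** variables x,y,z are x_0,x_1,x_2 *)
Definition rho1 : 'I_6 -> 'I_3 := fun i => inord (nth 0 [:: 0; 1; 0; 2; 1; 2] i).
Definition rho2 : 'I_6 -> 'I_3 := fun i => inord (nth 0 [:: 1; 0; 2; 0; 2; 1] i).

Definition sigma_id (k : edge * bool) : h1id sigma_ar :=
  let e := k.1 in
  if k.2 then
    (* f_u(x,y,z) ~ g_(u,v)(x,y,x,z,y,z) *)
    @H1Id _ sigma_ar (inl (sval e).1) (inr e) 3 (fun i : 'I_3 => i) rho1
  else
    (* f_v(x,y,z) ~ g_(u,v)(y,x,z,x,z,y) *)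
    @H1Id _ sigma_ar (inl (sval e).2) (inr e) 3 (fun i : 'I_3 => i) rho2.

Definition SigmaG : h1cond :=
  @H1Cond sigma_sym sigma_ar (edge * bool)%type sigma_id.

End SigmaG.

Definition K3 : rel 'I_3 := fun a b => a != b.

Definition graph_hom (V W : Type) (E : rel V) (F : rel W) (h : V -> W) : Prop :=
  forall u v, E u v -> F (h u) (h v).

Definition three_colorable (V : finType) (E : rel V) : Prop :=
  exists h : V -> 'I_3, graph_hom E K3 h.

(* Main.v *)
Require Import Defs.
From mathcomp Require Import all_boot.

Lemma rho_diff (j : 'I_6) : rho1 j != rho2 j.
Proof. case: j => [[|[|[|[|[|[|?]]]]]] ?] //; by rewrite /rho1 /rho2 /= -val_eqE /= !inordK. Qed.
Lemma rho_ex (a b : 'I_3) : a != b -> exists j : 'I_6, rho1 j = a /\ rho2 j = b.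
Proof.
case: a b => [[|[|[|?]]] Ha] //; case=> [[|[|[|?]]] Hb] //= _;
[exists (@Ordinal 6 0 isT)|exists (@Ordinal 6 2 isT)|exists (@Ordinal 6 1 isT)
|exists (@Ordinal 6 4 isT)|exists (@Ordinal 6 3 isT)|exists (@Ordinal 6 5 isT)];
by split; apply: val_inj; rewrite /rho1 /rho2 /= inordK.
Qed.

Definition pickj (a b : 'I_3) : 'I_6 :=
  odflt ord0 [pick j | (rho1 j == a) && (rho2 j == b)].

Lemma pickjP (a b : 'I_3) : a != b -> rho1 (pickj a b) = a /\ rho2 (pickj a b) = b.
Proof.
move=> ab; rewrite /pickj; case: pickP => [j /andP[/eqP -> /eqP ->]|H] //.
case: (rho_ex _ _ ab) => j [Ha Hb]; move: (H j); by rewrite Ha Hb !eqxx.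
Qed.

Definition projC (A : Type) (n : nat) (f : op A n) : Prop :=
  exists i : 'I_n, f = fun x => x i.

Lemma projC_clone (A : Type) : is_clone (@projC A).
Proof.
split; first by move=> n i; exists i.
move=> n m f gs [i ->] Hg; case: (Hg i) => j Hj; exists j.
by rewrite Hj.
Qed.

Theorem lemma3p3 (V : finType) (E : rel V) (Esym : symmetric E) :
  trivial_h1 (SigmaG E) <-> three_colorable E.
Proof.
split.
- move=> T; case: (T _ _ (projC_clone 'I_3)) => F [HC Hid].
  exists (fun v => F (inl v) (fun i : 'I_3 => i)).
  move=> u v Huv.
  pose e : edge E := exist _ (u, v) Huv.
  have H1 := Hid (e, true) (fun i => i).
  have H2 := Hid (e, false) (fun i => i).
  simpl in H1, H2.
  case: (HC (inr e)) => j Hj.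
  rewrite H1 H2 Hj /K3 /=.
  exact: rho_diff.
- move=> [h Hh] A C [Hproj _].
  exists (fun s => match s return op A (sigma_ar s) with
                   | inl v => fun x => x (h v)
                   | inr e => fun x => x (pickj (h (sval e).1) (h (sval e).2))
                   end).
  split.
  + by case=> [v|e]; apply: Hproj.
  + case=> [[[u v] Huv] []] x /=;
    have [H1 H2] := pickjP _ _ (Hh _ _ Huv); by rewrite ?H1 ?H2.
Qed.
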